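(* Suppose that $$\forall\,\varepsilon>0\;\exists\,\delta>0\ \text{such that}\ j(\varphi,\psi)\le\varepsilon\ \ \forall\,(\varphi,\psi)\in U_+\ \text{with}\ \|\varphi\|_0\le\delta ,$$ and that $j(\varphi,0)>0$ whenever $\varphi$ is a strictly positive constant function. Then for every solution $x=(w,v)^\phi$, $\phi\in X_+$, of $w'(t)=q(v(t))w(t)$, $v'(t)=j(w_t,v_t)-\mu v(t)$ one has $x_t\to0$ as $t\to\infty$ in both the $C$-norm and the $C^1$-norm.
   Context: Let $h>0$, $R_-<0$, $I=(R_-,\infty)$, $q:I\to\mathbb{R}$, $\mu>0$, $U=C^1([-h,0],\mathbb{R})\times C^1([-h,0],I)$, $j:U\to\mathbb{R}$, $U_+=C^1([-h,0],\mathbb{R}_+^2)$, $\|\cdot\|_0$ the sup-norm, $\|\phi\|_1=\|\phi\|_0+\|\phi'\|_0$; $x_t(s)=x(t+s)$. Define $F(\varphi,\psi)=(q(\psi(0))\varphi(0),\,j(\varphi,\psi)-\mu\psi(0))$ and $X_+=\{\phi\in C^1([-h,0],\mathbb{R}_+^2):\phi'(0)=F(\phi)\}\neq\emptyset$. Assume: $j$ is $C^1$ on $U$ with each derivative extending to a linear map on $C([-h,0],\mathbb{R}^2)$ depending continuously on $(\phi,\chi)$; for every bounded $B\subset U_+$ there is $L_B$ with $|j(\phi)-j(\chi)|\le L_B\|\phi-\chi\|_0$ on $B$; $j\ge0$ on $U_+$; $j(B_1\times B_2)$ is bounded whenever $B_1\times B_2\subset U_+$ with $B_1$ bounded; $q$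 is bounded and $C^1$; and $q(s)<0$ for all $s>0$. Solutions from $X_+$ exist globally and remain nonnegative. *)

(* Defs.v *)
From Stdlib Require Export Reals.
From Coquelicot Require Export Coquelicot.
Open Scope R_scope.

(** Functions on [-h,0] (and on [-h,oo)) are represented by total functions
    R -> R; only their values on the relevant interval matter.  Elements of
    C^1 spaces are carried together with their derivative function. *)

Definition seg (h : R) : R -> Prop := fun s => -h <= s <= 0.

Definition has_deriv_within (D : R -> Prop) (f f' : R -> R) (x : R) : Prop :=
  filterlim (fun y => (f y - f x) / (y - x))
    (within (fun y => D y /\ y <> x) (locally x)) (locally (f' x)).

Definition cont_within (D : R -> Prop) (f : R -> R) (x : R) : Prop :=
  filterlim f (within D (locally x)) (locally (f x)).

Definition C0_on (D : R -> Prop) (f : R -> R) : Prop :=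
  forall x, D x -> cont_within D f x.

Definition C1_on (D : R -> Prop) (f f' : R -> R) : Prop :=
  forall x, D x -> has_deriv_within D f f' x /\ cont_within D f' x.

Definition norm0 (h : R) (f : R -> R) : R :=
  real (Lub_Rbar (fun r => exists s, seg h s /\ r = Rabs (f s))).

Definition norm0p (h : R) (f g : R -> R) : R :=
  norm0 h (fun s => Rmax (Rabs (f s)) (Rabs (g s))).

Definition norm1p (h : R) (f df g dg : R -> R) : R :=
  norm0p h f g + norm0p h df dg.

Definition inU (h Rm : R) (p dp r dr : R -> R) : Prop :=
  C1_on (seg h) p dp /\ C1_on (seg h) r dr /\ (forall s, seg h s -> Rm < r s).

Definition inUplus (h : R) (p dp r dr : R -> R) : Prop :=
  C1_on (seg h) p dp /\ C1_on (seg h) r dr /\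
  (forall s, seg h s -> 0 <= p s /\ 0 <= r s).

Definition inC (h : R) (k l : R -> R) : Prop := C0_on (seg h) k /\ C0_on (seg h) l.

Definition inXplus (h mu : R) (q : R -> R) (j : (R -> R) -> (R -> R) -> R)
    (p dp r dr : R -> R) : Prop :=
  inUplus h p dp r dr /\ dp 0 = q (r 0) * p 0 /\ dr 0 = j p r - mu * r 0.

Definition j_welldef (h : R) (j : (R -> R) -> (R -> R) -> R) : Prop :=
  forall p1 r1 p2 r2, (forall s, seg h s -> p1 s = p2 s /\ r1 s = r2 s) ->
    j p1 r1 = j p2 r2.

Definition j_smooth_ext (h Rm : R) (j : (R -> R) -> (R -> R) -> R) : Prop :=
  exists De : (R -> R) -> (R -> R) -> (R -> R) -> (R -> R) -> R,
  (forall p1 r1 p2 r2 k1 l1 k2 l2,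
     (forall s, seg h s -> p1 s = p2 s /\ r1 s = r2 s /\ k1 s = k2 s /\ l1 s = l2 s) ->
     De p1 r1 k1 l1 = De p2 r2 k2 l2) /\
  (forall p dp r dr, inU h Rm p dp r dr ->
     forall k1 l1 k2 l2 a b, inC h k1 l1 -> inC h k2 l2 ->
     De p r (fun s => a * k1 s + b * k2 s) (fun s => a * l1 s + b * l2 s)
       = a * De p r k1 l1 + b * De p r k2 l2) /\
  (forall p dp r dr, inU h Rm p dp r dr ->
     forall eps, 0 < eps -> exists del, 0 < del /\
     forall k dk l dl, C1_on (seg h) k dk -> C1_on (seg h) l dl ->
       norm1p h k dk l dl < del ->
       inU h Rm (fun s => p s + k s) (fun s => dp s + dk s)
                (fun s => r s + l s) (fun s => dr s + dl s) ->
       Rabs (j (fun s => p s + k s) (fun s => r s + l s) - j p r - De p r k l)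
         <= eps * norm1p h k dk l dl) /\
  (* u |-> Dj(u) is continuous into L(C^1,R) (operator norm) *)
  (forall p dp r dr, inU h Rm p dp r dr ->
     forall eps, 0 < eps -> exists del, 0 < del /\
     forall p' dp' r' dr', inU h Rm p' dp' r' dr' ->
       norm1p h (fun s => p' s - p s) (fun s => dp' s - dp s)
                (fun s => r' s - r s) (fun s => dr' s - dr s) < del ->
       forall k dk l dl, C1_on (seg h) k dk -> C1_on (seg h) l dl ->
         Rabs (De p' r' k l - De p r k l) <= eps * norm1p h k dk l dl) /\
  (forall p dp r dr k l, inU h Rm p dp r dr -> inC h k l ->
     forall eps, 0 < eps -> exists del, 0 < del /\
     forall p' dp' r' dr' k' l', inU h Rm p' dp' r' dr' -> inC h k' l' ->
       norm1p h (fun s => p' s - p s) (fun s => dp' s - dp s)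
                (fun s => r' s - r s) (fun s => dr' s - dr s) < del ->
       norm0p h (fun s => k' s - k s) (fun s => l' s - l s) < del ->
       Rabs (De p' r' k' l' - De p r k l) < eps).

Definition j_loc_lip (h : R) (j : (R -> R) -> (R -> R) -> R) : Prop :=
  forall M, exists L, forall p dp r dr p' dp' r' dr',
    inUplus h p dp r dr -> inUplus h p' dp' r' dr' ->
    norm1p h p dp r dr <= M -> norm1p h p' dp' r' dr' <= M ->
    Rabs (j p r - j p' r') <= L * norm0p h (fun s => p s - p' s) (fun s => r s - r' s).

Definition j_nonneg (h : R) (j : (R -> R) -> (R -> R) -> R) : Prop :=
  forall p dp r dr, inUplus h p dp r dr -> 0 <= j p r.

Definition j_bdd_images (h : R) (j : (R -> R) -> (R -> R) -> R) : Prop :=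
  forall (B1 B2 : (R -> R) -> (R -> R) -> Prop),
    (forall p dp, B1 p dp -> C1_on (seg h) p dp /\ forall s, seg h s -> 0 <= p s) ->
    (forall r dr, B2 r dr -> C1_on (seg h) r dr /\ forall s, seg h s -> 0 <= r s) ->
    (exists M, forall p dp, B1 p dp -> norm0 h p + norm0 h dp <= M) ->
    exists K, forall p dp r dr, B1 p dp -> B2 r dr -> Rabs (j p r) <= K.

Definition is_solution (h Rm mu : R) (q : R -> R) (j : (R -> R) -> (R -> R) -> R)
    (w dw v dv : R -> R) : Prop :=
  C1_on (fun t => -h <= t) w dw /\ C1_on (fun t => -h <= t) v dv /\
  (forall t, -h <= t -> Rm < v t) /\
  (forall t, 0 <= t ->
     dw t = q (v t) * w t /\
     dv t = j (fun s => w (t + s)) (fun s => v (t + s)) - mu * v t).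

(* Main.v *)
Require Import Defs.
From Stdlib Require Import Lra Classical.

Lemma ballR (x e y : R) : ball x e y <-> Rabs (y - x) < e.
Proof. split; intro H; exact H. Qed.

Lemma norm0_bound (h : R) (f : R -> R) (M : R) : 0 <= h ->
  (forall s, seg h s -> Rabs (f s) <= M) -> 0 <= norm0 h f <= M.
Proof.
  intros Hh Hb. unfold norm0.
  destruct (Lub_Rbar_correct (fun r => exists s, seg h s /\ r = Rabs (f s))) as [Hub Hlub].
  assert (H0 : Rbar_le (Rabs (f 0)) (Lub_Rbar (fun r => exists s, seg h s /\ r = Rabs (f s)))).
  { apply Hub. exists 0. split; [unfold seg; lra | reflexivity]. }
  assert (H1 : Rbar_le (Lub_Rbar (fun r => exists s, seg h s /\ r = Rabs (f s))) M).
  { apply Hlub. intros x [s [Hs ->]]. simpl. apply Hb; exact Hs. }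
  destruct (Lub_Rbar (fun r => exists s, seg h s /\ r = Rabs (f s))) as [l| |];
    simpl in *; try contradiction.
  split; [ pose proof (Rabs_pos (f 0)); lra | exact H1].
Qed.

Lemma hdw_derive (D : R -> Prop) (f df : R -> R) (x : R) :
  (exists d, 0 < d /\ forall y, Rabs (y - x) < d -> D y) ->
  has_deriv_within D f df x -> is_derive f x (df x).
Proof.
  intros [d [Hd HD]] H. apply is_derive_Reals. intros eps Heps.
  destruct (proj1 (filterlim_locally _ _) H (mkposreal eps Heps)) as [del Hdel].
  assert (Hm : 0 < Rmin del d) by (destruct del; simpl; apply Rmin_pos; lra).
  exists (mkposreal _ Hm). intros k Hk Hkl. simpl in Hkl.
  assert (Hk1 : Rabs k < del) by (pose proof (Rmin_l del d); lra).
  assert (Hk2 : Rabs k < d) by (pose proof (Rmin_r del d); lra).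
  specialize (Hdel (x + k)). 
  assert (Hb : ball x del (x + k)) by (apply ballR; replace (x + k - x) with k by ring; exact Hk1).
  specialize (Hdel Hb). 
  assert (HDk : D (x + k) /\ x + k <> x).
  { split. apply HD. replace (x + k - x) with k by ring. exact Hk2. lra. }
  specialize (Hdel HDk). apply ballR in Hdel. simpl in Hdel.
  replace (x + k - x) with k in Hdel by ring. exact Hdel.
Qed.

Lemma shift_C1 (h t : R) (f df : R -> R) : 0 <= t ->
  C1_on (fun u => -h <= u) f df -> C1_on (seg h) (fun s => f (t+s)) (fun s => df (t+s)).
Proof.
  intros Ht H x Hx. destruct (H (t + x)) as [H1 H2].
  { unfold seg in Hx; lra. }
  split.
  - unfold has_deriv_within. apply filterlim_locally. intros eps.
    destruct (proj1 (filterlim_locally _ _) H1 eps) as [del Hdel].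
    exists del. intros y Hy [Hsy Hyx].
    assert (Hb : ball (t + x) del (t + y)).
    { apply ballR. apply ballR in Hy. replace (t + y - (t + x)) with (y - x) by ring. exact Hy. }
    assert (HD : -h <= t + y /\ t + y <> t + x) by (unfold seg in Hsy; lra).
    specialize (Hdel _ Hb HD). 
    replace (t + y - (t + x)) with (y - x) in Hdel by ring. exact Hdel.
  - unfold cont_within. apply filterlim_locally. intros eps.
    destruct (proj1 (filterlim_locally _ _) H2 eps) as [del Hdel].
    exists del. intros y Hy Hsy.
    assert (Hb : ball (t + x) del (t + y)).
    { apply ballR. apply ballR in Hy. replace (t + y - (t + x)) with (y - x) by ring. exact Hy. }
    assert (HD : -h <= t + y) by (unfold seg in Hsy; lra).
    exact (Hdel _ Hb HD).
Qed.

Lemma mvt_le (g dg : R -> R) (a b C : R) : a <= b ->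
  (forall x, a <= x <= b -> is_derive g x (dg x)) ->
  (forall x, a <= x <= b -> dg x <= C) -> g b - g a <= C * (b - a).
Proof.
  intros Hab Hd Hc.
  destruct (MVT_gen g a b dg) as [c [Hc1 Hc2]].
  - intros x Hx. rewrite Rmin_left in Hx by lra. rewrite Rmax_right in Hx by lra.
    apply Hd; lra.
  - intros x Hx. rewrite Rmin_left in Hx by lra. rewrite Rmax_right in Hx by lra.
    apply derivable_continuous_pt. exists (dg x). apply is_derive_Reals. apply Hd; lra.
  - rewrite Rmin_left in Hc1 by lra. rewrite Rmax_right in Hc1 by lra.
    rewrite Hc2. apply Rmult_le_compat_r. lra. apply Hc; lra.
Qed.

Lemma mvt_ge (g dg : R -> R) (a b C : R) : a <= b ->
  (forall x, a <= x <= b -> is_derive g x (dg x)) ->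
  (forall x, a <= x <= b -> C <= dg x) -> C * (b - a) <= g b - g a.
Proof.
  intros Hab Hd Hc.
  destruct (MVT_gen g a b dg) as [c [Hc1 Hc2]].
  - intros x Hx. rewrite Rmin_left in Hx by lra. rewrite Rmax_right in Hx by lra.
    apply Hd; lra.
  - intros x Hx. rewrite Rmin_left in Hx by lra. rewrite Rmax_right in Hx by lra.
    apply derivable_continuous_pt. exists (dg x). apply is_derive_Reals. apply Hd; lra.
  - rewrite Rmin_left in Hc1 by lra. rewrite Rmax_right in Hc1 by lra.
    rewrite Hc2. apply Rmult_le_compat_r. lra. apply Hc; lra.
Qed.

Lemma dexp (f df : R -> R) A mu T0 (x : R) : mu <> 0 -> is_derive f x (df x) -> is_derive (fun s => (f s - A / mu) * exp (mu * (s - T0))) x ((df x + mu * f x - A) * exp (mu * (x - T0))).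
Proof.
intros Hmu Hd.
assert (H2 : is_derive (fun s => exp (mu * (s - T0))) x (mu * exp (mu * (x - T0)))).
{ auto_derive. exact I. rewrite Rmult_1_r; reflexivity. }
assert (H1 : is_derive (fun s => f s - A / mu) x (df x)).
{ pose proof (is_derive_minus f (fun _ => A/mu) x (df x) 0 Hd (is_derive_const (A/mu) x)) as H.
  unfold minus, plus, opp in H; simpl in H. replace (df x + - 0) with (df x) in H by ring. exact H. }
pose proof (is_derive_mult _ _ x _ _ H1 H2 (fun n m => Rmult_comm n m)) as Hm.
simpl in Hm. unfold mult, plus in Hm; simpl in Hm.
replace ((df x + mu * f x - A) * exp (mu * (x - T0))) with (df x * exp (mu * (x - T0)) +
       (f x - A / mu) * (mu * exp (mu * (x - T0)))). exact Hm. field. exact Hmu.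
Qed.


Lemma exp_cmp (f df : R -> R) (T0 A mu : R) : 0 < mu ->
  (forall t, T0 <= t -> is_derive f t (df t)) ->
  (forall t, T0 <= t -> df t <= A - mu * f t) ->
  forall t, T0 <= t -> f t <= A / mu + (f T0 - A / mu) * exp (- mu * (t - T0)).
Proof.
  intros Hmu Hd Hle t Ht.
  set (g := fun s => (f s - A / mu) * exp (mu * (s - T0))).
  set (dg := fun s => (df s + mu * f s - A) * exp (mu * (s - T0))).
  assert (Hg : g t - g T0 <= 0 * (t - T0)).
  { apply mvt_le with (dg := dg); [lra | |].
    - intros x Hx. unfold g, dg. apply dexp. lra. apply Hd; lra.
    - intros x Hx. unfold dg. apply Rmult_le_0_r. specialize (Hle x ltac:(lra)). lra.
      left; apply exp_pos. }
  unfold g in Hg. replace (T0 - T0) with 0 in Hg by ring. rewrite Rmult_0_r, exp_0 in Hg.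
  assert (He : exp (mu * (t - T0)) * exp (- mu * (t - T0)) = 1).
  { rewrite <- exp_plus. replace (mu * (t - T0) + - mu * (t - T0)) with 0 by ring. apply exp_0. }
  assert (Hp := exp_pos (- mu * (t - T0))).
  assert (H3 : (f t - A / mu) * exp (mu * (t - T0)) * exp (- mu * (t - T0)) <= (f T0 - A / mu) * exp (- mu * (t - T0))).
  { apply Rmult_le_compat_r; lra. }
  rewrite Rmult_assoc, He in H3. lra.
Qed.

Lemma norm0p_bound (h : R) (f g : R -> R) (X : R) : 0 <= h ->
  (forall s, seg h s -> Rabs (f s) <= X /\ Rabs (g s) <= X) -> 0 <= norm0p h f g <= X.
Proof.
  intros Hh Hb. unfold norm0p. apply norm0_bound; [exact Hh|].
  intros s Hs. destruct (Hb s Hs) as [H1 H2].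
  rewrite Rabs_pos_eq. apply Rmax_lub; assumption.
  eapply Rle_trans; [apply Rabs_pos | apply Rmax_l].
Qed.

Lemma C1_const (h c : R) : C1_on (seg h) (fun _ => c) (fun _ => 0).
Proof.
  intros x Hx. split.
  - unfold has_deriv_within. apply filterlim_locally. intros eps.
    exists (mkposreal 1 Rlt_0_1). intros y _ _. apply ballR.
    replace ((c - c) / (y - x) - 0) with 0 by (unfold Rdiv; ring).
    rewrite Rabs_R0. apply cond_pos.
  - unfold cont_within. apply filterlim_locally. intros eps.
    exists (mkposreal 1 Rlt_0_1). intros y _ _. apply ballR.
    replace (0 - 0) with 0 by ring. rewrite Rabs_R0. apply cond_pos.
Qed.

Lemma exp_le1 (x : R) : x <= 0 -> exp x <= 1.
Proof.
  intros Hx. destruct (Rle_lt_or_eq_dec _ _ Hx) as [H|H].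
  - rewrite <- exp_0. left. apply exp_increasing. exact H.
  - rewrite H, exp_0. lra.
Qed.

Lemma q_cont (Rm : R) (q : R -> R) : (exists dq, C1_on (fun s => Rm < s) q dq) ->
  forall x, Rm < x -> continuity_pt q x.
Proof.
  intros [dq Hdq] x Hx. apply derivable_continuous_pt. exists (dq x).
  apply is_derive_Reals. apply (hdw_derive (fun s => Rm < s)).
  - exists (x - Rm). split; [lra|]. intros y Hy. apply Rabs_def2 in Hy. lra.
  - apply (proj1 (Hdq x Hx)).
Qed.

Lemma q_nonpos (Rm : R) (q : R -> R) : Rm < 0 -> (forall x, Rm < x -> continuity_pt q x) ->
  (forall s, 0 < s -> q s < 0) -> forall s, 0 <= s -> q s <= 0.
Proof.
  intros HRm Hc Hn s Hs. destruct (Rle_lt_or_eq_dec _ _ Hs) as [H|H].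
  - left; apply Hn; exact H.
  - subst s. destruct (Rle_lt_dec (q 0) 0) as [H|H]; [exact H|].
    exfalso. pose proof (proj1 (continuity_pt_filterlim q 0) (Hc 0 HRm)) as Hf.
    destruct (proj1 (filterlim_locally _ _) Hf (mkposreal _ H)) as [d Hd].
    assert (Hdp := cond_pos d).
    specialize (Hd (d/2)). 
    assert (Hb : ball 0 d (d/2)).
    { apply ballR. rewrite Rabs_pos_eq; lra. }
    specialize (Hd Hb). apply ballR in Hd. change (Rabs (q (d/2) - q 0) < q 0) in Hd. apply Rabs_def2 in Hd.
    assert (q (d/2) < 0) by (apply Hn; lra). lra.
Qed.

Theorem proposition2
  (h Rm mu : R) (q : R -> R) (j : (R -> R) -> (R -> R) -> R)
  (Hh : 0 < h) (HRm : Rm < 0) (Hmu : 0 < mu)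
  (Hj_wd : j_welldef h j)
  (Hj_C1 : j_smooth_ext h Rm j)
  (Hj_lip : j_loc_lip h j)
  (Hj_nonneg : j_nonneg h j)
  (Hj_bdd : j_bdd_images h j)
  (Hq_bdd : exists Q, forall s, Rm < s -> Rabs (q s) <= Q)
  (Hq_C1 : exists dq, C1_on (fun s => Rm < s) q dq)
  (Hq_neg : forall s, 0 < s -> q s < 0)
  (H1 : forall eps, 0 < eps -> exists del, 0 < del /\
          forall p dp r dr, inUplus h p dp r dr ->
            norm0 h p <= del -> j p r <= eps)
  (H2 : forall c, 0 < c -> 0 < j (fun _ => c) (fun _ => 0)) :
  forall p dp r dr, inXplus h mu q j p dp r dr ->
  forall w dw v dv, is_solution h Rm mu q j w dw v dv ->
  (forall s, seg h s -> w s = p s /\ v s = r s) ->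
  (* solutions from X_+ remain nonnegative (standing assumption) *)
  (forall t, -h <= t -> 0 <= w t /\ 0 <= v t) ->
  is_lim (fun t => norm0p h (fun s => w (t + s)) (fun s => v (t + s)))
         p_infty (Finite 0) /\
  is_lim (fun t => norm1p h (fun s => w (t + s)) (fun s => dw (t + s))
                            (fun s => v (t + s)) (fun s => dv (t + s)))
         p_infty (Finite 0).
Proof.
  intros p dp r dr HX w dw v dv Hsol Hinit Hnn.
  destruct Hsol as [Cw [Cv [Hvr Heq]]].
  destruct Hq_bdd as [Q HQ].
  assert (HQ0 : 0 <= Q) by (specialize (HQ 0 HRm); pose proof (Rabs_pos (q 0)); lra).
  assert (Hqc := q_cont Rm q Hq_C1).
  assert (Hq0 := q_nonpos Rm q HRm Hqc Hq_neg).
  assert (Dw : forall t, 0 <= t -> is_derive w t (dw t)).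
  { intros t Ht. apply (hdw_derive (fun u => -h <= u)).
    - exists h. split; [lra|]. intros y Hy. apply Rabs_def2 in Hy. lra.
    - apply (proj1 (Cw t ltac:(lra))). }
  assert (Dv : forall t, 0 <= t -> is_derive v t (dv t)).
  { intros t Ht. apply (hdw_derive (fun u => -h <= u)).
    - exists h. split; [lra|]. intros y Hy. apply Rabs_def2 in Hy. lra.
    - apply (proj1 (Cv t ltac:(lra))). }
  set (J := fun t => j (fun s => w (t+s)) (fun s => v (t+s))).
  assert (Hdv : forall t, 0 <= t -> dv t = J t - mu * v t) by (intros t Ht; apply (Heq t Ht)).
  assert (Hdw : forall t, 0 <= t -> dw t = q (v t) * w t) by (intros t Ht; apply (Heq t Ht)).
  assert (HU : forall t, 0 <= t -> inUplus h (fun s => w (t+s)) (fun s => dw (t+s))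
                                           (fun s => v (t+s)) (fun s => dv (t+s))).
  { intros t Ht. split; [apply shift_C1; assumption|]. split; [apply shift_C1; assumption|].
    intros s Hs. apply Hnn. unfold seg in Hs. lra. }
  assert (HJ0 : forall t, 0 <= t -> 0 <= J t) by (intros t Ht; exact (Hj_nonneg _ _ _ _ (HU t Ht))).
  assert (Hwdec : forall a b, 0 <= a -> a <= b -> w b <= w a).
  { intros a b Ha Hab. assert (w b - w a <= 0 * (b - a)); [|lra].
    apply (mvt_le w dw); [lra| intros x Hx; apply Dw; lra |].
    intros x Hx. rewrite Hdw by lra. assert (q (v x) <= 0) by (apply Hq0; apply Hnn; lra).
    assert (0 <= w x) by (apply Hnn; lra). nra. }
  set (W0 := w 0).
  assert (Hwb : forall t, 0 <= t -> 0 <= w t <= W0).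
  { intros t Ht. split; [apply Hnn; lra| apply Hwdec; lra]. }
  assert (HdwQ : forall t, 0 <= t -> Rabs (dw t) <= Q * w t).
  { intros t Ht. rewrite Hdw by lra. rewrite Rabs_mult.
    rewrite (Rabs_pos_eq (w t)) by (apply Hnn; lra).
    apply Rmult_le_compat_r; [apply Hnn; lra|]. apply HQ. apply Hvr. lra. }
  assert (Hdwb : forall t, 0 <= t -> Rabs (dw t) <= Q * W0).
  { intros t Ht. eapply Rle_trans; [apply HdwQ; lra|]. apply Rmult_le_compat_l; [lra|]. apply Hwb; lra. }
  destruct (Hj_bdd
     (fun p dp => exists t, h <= t /\ p = (fun s => w (t+s)) /\ dp = (fun s => dw (t+s)))
     (fun r dr => exists t, h <= t /\ r = (fun s => v (t+s)) /\ dr = (fun s => dv (t+s))))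
     as [K HK].
  { intros p0 dp0 [t [Ht [-> ->]]]. split; [apply shift_C1; [lra|assumption]|].
    intros s Hs. apply Hnn. unfold seg in Hs. lra. }
  { intros p0 dp0 [t [Ht [-> ->]]]. split; [apply shift_C1; [lra|assumption]|].
    intros s Hs. apply Hnn. unfold seg in Hs. lra. }
  { exists (W0 + Q * W0). intros p0 dp0 [t [Ht [-> ->]]].
    assert (A1 : norm0 h (fun s => w (t + s)) <= W0).
    { apply norm0_bound; [lra|]. intros s Hs. unfold seg in Hs.
      rewrite Rabs_pos_eq by (apply Hwb; lra). apply Hwb; lra. }
    assert (A2 : norm0 h (fun s => dw (t + s)) <= Q * W0).
    { apply norm0_bound; [lra|]. intros s Hs. unfold seg in Hs. apply Hdwb; lra. }
    lra. }
  assert (HJK : forall t, h <= t -> J t <= K).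
  { intros t Ht. eapply Rle_trans; [apply Rle_abs|]. unfold J.
    apply (HK _ (fun s => dw (t+s)) _ (fun s => dv (t+s))); exists t; auto. }
  assert (HK0 : 0 <= K) by (pose proof (HJK h ltac:(lra)); pose proof (HJ0 h ltac:(lra)); lra).
  set (B := K / mu + v h).
  assert (HvB : forall t, h <= t -> v t <= B).
  { intros t Ht.
    assert (E := exp_cmp v dv h K mu Hmu ltac:(intros; apply Dv; lra)
                  ltac:(intros; rewrite Hdv by lra; pose proof (HJK t0 ltac:(lra)); lra) t Ht).
    assert (He1 : exp (- mu * (t - h)) <= 1) by (apply exp_le1; nra).
    assert (He0 := exp_pos (- mu * (t - h))).
    assert (Hvh : 0 <= v h) by (apply Hnn; lra).
    assert (HKm : 0 <= K / mu) by (apply Rmult_le_pos; [lra| left; apply Rinv_0_lt_compat; lra]).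
    unfold B. destruct (Rle_lt_dec (v h - K / mu) 0) as [Hs|Hs].
    - assert ((v h - K / mu) * exp (- mu * (t - h)) <= 0) by nra. lra.
    - assert ((v h - K / mu) * exp (- mu * (t - h)) <= v h - K / mu) by nra. lra. }
  assert (HB0 : 0 <= B) by (pose proof (Hnn h ltac:(lra)); pose proof (HvB h ltac:(lra)); lra).
  assert (Hdvb : forall t, h <= t -> Rabs (dv t) <= K + mu * B).
  { intros t Ht. rewrite Hdv by lra. apply Rabs_le.
    pose proof (HJK t Ht). pose proof (HJ0 t ltac:(lra)). pose proof (HvB t Ht).
    pose proof (Hnn t ltac:(lra)). nra. }
  assert (Hw0 : forall eps, 0 < eps -> exists T, 0 <= T /\ w T <= eps).
  { intros eps Heps. apply NNPP. intros Hno.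
    assert (Hgt : forall t, 0 <= t -> eps < w t).
    { intros t Ht. destruct (Rle_lt_dec (w t) eps) as [H|H]; [|exact H].
      exfalso. apply Hno. exists t. auto. }
    set (E := fun x => exists t, 0 <= t /\ x = - w t).
    destruct (completeness E) as [l [Hl1 Hl2]].
    { exists (- eps). intros x [t [Ht ->]]. pose proof (Hgt t Ht). lra. }
    { exists (- w 0). exists 0. split; [lra|reflexivity]. }
    set (winf := - l).
    assert (Hwi1 : forall t, 0 <= t -> winf <= w t).
    { intros t Ht. assert (- w t <= l) by (apply Hl1; exists t; auto). unfold winf; lra. }
    assert (Hwi2 : forall eta, 0 < eta -> exists t, 0 <= t /\ w t < winf + eta).
    { intros eta Heta. apply NNPP. intros Hn.
      assert (l <= l - eta); [|lra].
      apply Hl2. intros x [t [Ht ->]].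
      destruct (Rlt_le_dec (w t) (winf + eta)) as [H|H].
      - exfalso. apply Hn. exists t. auto.
      - unfold winf in H. lra. }
    assert (Hwi3 : eps <= winf).
    { assert (l <= - eps); [|unfold winf; lra].
      apply Hl2. intros x [t [Ht ->]]. pose proof (Hgt t Ht). lra. }
    assert (Hv0 : forall a, 0 < a -> exists T, h <= T /\ forall t, T <= t -> v t < a).
    { intros a Ha. destruct (Rlt_le_dec B a) as [HBa|HBa].
      { exists h. split; [lra|]. intros t Ht. pose proof (HvB t ltac:(lra)). lra. }
      destruct (continuity_ab_maj q (a/2) B ltac:(lra)) as [Mx [HMx1 HMx2]].
      { intros c Hc. apply Hqc. lra. }
      set (m := - q Mx).
      assert (Hm : 0 < m) by (unfold m; pose proof (Hq_neg Mx ltac:(lra)); lra).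
      set (D := K + mu * B + 1).
      assert (HD : 0 < D) by (unfold D; nra).
      set (tau := a / (2 * D)).
      assert (Htau : 0 < tau) by (unfold tau; apply Rdiv_lt_0_compat; lra).
      assert (HDtau : D * tau = a / 2) by (unfold tau; field; lra).
      set (eta := m * winf * tau / 2).
      assert (Heta : 0 < eta) by (unfold eta; assert (0 < m * winf) by nra; nra).
      destruct (Hwi2 eta Heta) as [t0 [Ht0 Hwt0]].
      exists (Rmax t0 h). split; [apply Rmax_r|]. intros t Ht.
      pose proof (Rmax_l t0 h). pose proof (Rmax_r t0 h).
      destruct (Rlt_le_dec (v t) a) as [Hva|Hva]; [exact Hva|]. exfalso.
      assert (Hvs : forall s, t <= s <= t + tau -> a / 2 <= v s).
      { intros s Hs.
        assert (- D * (s - t) <= v s - v t).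
        { apply (mvt_ge v dv); [lra| intros x Hx; apply Dv; lra|].
          intros x Hx. pose proof (Hdvb x ltac:(lra)) as Hb1.
          pose proof (Rle_abs (- dv x)) as Hb2. rewrite Rabs_Ropp in Hb2. unfold D. lra. }
        assert (D * (s - t) <= D * tau) by (apply Rmult_le_compat_l; lra).
        lra. }
      assert (Hw_drop : w (t + tau) - w t <= (- m * winf) * (t + tau - t)).
      { apply (mvt_le w dw); [lra| intros x Hx; apply Dw; lra|].
        intros x Hx. rewrite Hdw by lra.
        assert (Hqv : q (v x) <= - m).
        { unfold m. rewrite Ropp_involutive. apply HMx1. split; [apply Hvs; lra| apply HvB; lra]. }
        pose proof (Hwi1 x ltac:(lra)). nra. }
      replace (t + tau - t) with tau in Hw_drop by ring.
      pose proof (Hwdec t0 t Ht0 ltac:(lra)).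
      pose proof (Hwi1 (t + tau) ltac:(lra)).
      assert (m * winf * tau = 2 * eta) by (unfold eta; field).
      lra. }
    assert (Hwinf : 0 < winf) by lra.
    set (c := j (fun _ => winf) (fun _ => 0)).
    assert (Hc : 0 < c) by (apply H2; exact Hwinf).
    set (M := W0 + B + (Q * W0 + (K + mu * B))).
    destruct (Hj_lip M) as [L HL].
    set (a := c / (4 * (Rabs L + mu + 1))).
    assert (HL0 := Rabs_pos L).
    assert (Ha : 0 < a) by (unfold a; apply Rdiv_lt_0_compat; lra).
    assert (Ha4 : (Rabs L + mu + 1) * a = c / 4) by (unfold a; field; lra).
    destruct (Hv0 a Ha) as [T1 [HT1h HT1]].
    destruct (Hwi2 a Ha) as [T2 [HT2 HT2']].
    set (T := Rmax T1 T2 + h).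
    pose proof (Rmax_l T1 T2). pose proof (Rmax_r T1 T2).
    assert (HJlow : forall t, T <= t -> c / 2 <= J t).
    { intros t Ht.
      assert (Hs : forall s, seg h s -> T1 <= t + s /\ T2 <= t + s /\ h <= t + s).
      { intros s Hs. unfold seg, T in *. lra. }
      assert (HN : 0 <= norm0p h (fun s => w (t + s) - winf) (fun s => v (t + s) - 0) <= a).
      { apply norm0p_bound; [lra|]. intros s Hs0. destruct (Hs s Hs0) as [A1 [A2 A3]].
        split.
        - pose proof (Hwi1 (t + s) ltac:(lra)). pose proof (Hwdec T2 (t+s) HT2 A2).
          rewrite Rabs_pos_eq by lra. lra.
        - pose proof (HT1 (t + s) A1). pose proof (Hnn (t+s) ltac:(lra)).
          rewrite Rabs_pos_eq by lra. lra. }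
      assert (HUc : inUplus h (fun _ => winf) (fun _ => 0) (fun _ => 0) (fun _ => 0)).
      { split; [apply C1_const|]. split; [apply C1_const|]. intros; lra. }
      assert (HM1 : norm1p h (fun s => w (t + s)) (fun s => dw (t + s))
                           (fun s => v (t + s)) (fun s => dv (t + s)) <= M).
      { unfold norm1p, M.
        assert (norm0p h (fun s => w (t + s)) (fun s => v (t + s)) <= W0 + B).
        { apply norm0p_bound; [lra|]. intros s Hs0. destruct (Hs s Hs0) as [A1 [A2 A3]].
          pose proof (Hwb (t+s) ltac:(lra)). pose proof (HvB (t+s) A3).
          pose proof (Hnn (t+s) ltac:(lra)).
          rewrite !Rabs_pos_eq by lra. lra. }
        assert (norm0p h (fun s => dw (t + s)) (fun s => dv (t + s)) <= Q * W0 + (K + mu * B)).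
        { apply norm0p_bound; [lra|]. intros s Hs0. destruct (Hs s Hs0) as [A1 [A2 A3]].
          pose proof (Hdwb (t+s) ltac:(lra)). pose proof (Hdvb (t+s) A3).
          assert (0 <= Q * W0) by (apply Rmult_le_pos; [lra| apply (Hwb 0); lra]).
          assert (0 <= K + mu * B) by nra.
          split; lra. }
        lra. }
      assert (HM2 : norm1p h (fun _ => winf) (fun _ => 0) (fun _ => 0) (fun _ => 0) <= M).
      { unfold norm1p, M.
        assert (norm0p h (fun _ => winf) (fun _ => 0) <= W0).
        { apply norm0p_bound; [lra|]. intros s _. rewrite Rabs_R0, Rabs_pos_eq by lra.
          pose proof (Hwi1 0 ltac:(lra)). unfold W0. lra. }
        assert (norm0p h (fun _ => 0) (fun _ => 0) <= 0).
        { apply norm0p_bound; [lra|]. intros s _. rewrite Rabs_R0. lra. }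
        assert (0 <= Q * W0) by (apply Rmult_le_pos; [lra| apply (Hwb 0); lra]).
        assert (0 <= K + mu * B) by nra. lra. }
      pose proof (HL _ _ _ _ _ _ _ _ (HU t ltac:(unfold T in Ht; lra)) HUc HM1 HM2) as HLt.
      fold (J t) in HLt. fold c in HLt.
      pose proof (Rle_abs (- (J t - c))) as Hab. rewrite Rabs_Ropp in Hab.
      assert (L * norm0p h (fun s => w (t + s) - winf) (fun s => v (t + s) - 0) <= Rabs L * a).
      { eapply Rle_trans; [apply Rle_abs|]. rewrite Rabs_mult.
        rewrite (Rabs_pos_eq (norm0p _ _ _)) by lra. apply Rmult_le_compat_l; lra. }
      assert (Rabs L * a <= c / 4) by nra.
      lra. }
    set (s0 := 4 * a / c).
    assert (Hs0 : 0 < s0) by (unfold s0; apply Rdiv_lt_0_compat; lra).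
    assert (Hfin : c / 4 * (T + s0 - T) <= v (T + s0) - v T).
    { apply (mvt_ge v dv); [lra| intros x Hx; apply Dv; unfold T in Hx; lra|].
      intros x Hx. rewrite Hdv by (unfold T in Hx; lra).
      pose proof (HJlow x ltac:(lra)).
      pose proof (HT1 x ltac:(unfold T in Hx; lra)).
      assert (mu * v x <= mu * a) by (apply Rmult_le_compat_l; lra).
      assert (mu * a <= c / 4) by nra. lra. }
    replace (T + s0 - T) with s0 in Hfin by ring.
    assert (c / 4 * s0 = a) by (unfold s0; field; lra).
    pose proof (HT1 (T + s0) ltac:(unfold T; lra)).
    pose proof (Hnn T ltac:(unfold T; lra)).
    lra. }
  assert (Hfin : forall eta, 0 < eta -> exists T, h <= T /\
            forall t, T <= t -> w t <= eta /\ v t <= eta /\ J t <= eta).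
  { intros eta Heta.
    set (e' := eta * mu / (2 * (mu + 1))).
    assert (He' : 0 < e') by (unfold e'; apply Rdiv_lt_0_compat; nra).
    assert (He'1 : e' <= eta).
    { unfold e'. apply (Rmult_le_reg_r (2 * (mu + 1))); [lra|].
      unfold Rdiv. rewrite Rmult_assoc, Rinv_l by lra. nra. }
    assert (He'2 : e' / mu <= eta / 2).
    { replace (e' / mu) with (eta / (2 * (mu + 1))) by (unfold e'; field; lra).
      apply Rmult_le_compat_l; [lra|]. apply Rinv_le_contravar; lra. }
    destruct (H1 e' He') as [del [Hdel HdelJ]].
    destruct (Hw0 (Rmin del eta) ltac:(apply Rmin_pos; lra)) as [Tw [HTw HwTw]].
    pose proof (Rmin_l del eta). pose proof (Rmin_r del eta).
    set (T0 := Tw + h).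
    assert (HJe : forall t, T0 <= t -> J t <= e').
    { intros t Ht. apply (HdelJ _ (fun s => dw (t+s)) _ (fun s => dv (t+s))).
      - apply HU. unfold T0 in Ht; lra.
      - apply norm0_bound; [lra|]. intros s Hs. unfold seg, T0 in *.
        pose proof (Hwdec Tw (t+s) HTw ltac:(lra)). pose proof (Hnn (t+s) ltac:(lra)).
        rewrite Rabs_pos_eq by lra. lra. }
    assert (E := exp_cmp v dv T0 e' mu Hmu ltac:(intros; apply Dv; unfold T0 in *; lra)
                  ltac:(intros tt Htt; rewrite Hdv by (unfold T0 in *; lra); pose proof (HJe tt Htt); lra)).
    set (T := T0 + 2 * B / (eta * mu) + 1).
    assert (HBe : 0 <= 2 * B / (eta * mu)).
    { apply Rmult_le_pos; [lra| left; apply Rinv_0_lt_compat; nra]. }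
    exists T. split; [unfold T, T0; lra|]. intros t Ht.
    split; [pose proof (Hwdec Tw t HTw ltac:(unfold T, T0 in *; lra)); lra|].
    split; [|pose proof (HJe t ltac:(unfold T in *; lra)); lra].
    specialize (E t ltac:(unfold T in *; lra)).
    set (x := mu * (t - T0)) in *.
    assert (Hx : 2 * B / eta <= x).
    { unfold x. replace (2 * B / eta) with (mu * (2 * B / (eta * mu))) by (field; lra).
      apply Rmult_le_compat_l; unfold T in Ht; lra. }
    assert (Hx0 : 0 < x) by (unfold x, T in *; nra).
    assert (Hex := exp_ineq1 x ltac:(lra)).
    replace (- mu * (t - T0)) with (- x) in E by (unfold x; ring).
    rewrite exp_Ropp in E.
    assert (Hexp := exp_pos x).
    pose proof (HvB T0 ltac:(unfold T0; lra)). pose proof (Hnn T0 ltac:(unfold T0; lra)).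
    assert (Hvv : (v T0 - e' / mu) * / exp x <= B * / exp x).
    { apply Rmult_le_compat_r; [left; apply Rinv_0_lt_compat; lra|].
      assert (0 <= e' / mu) by (apply Rdiv_le_0_compat; lra). lra. }
    assert (HBx : B * / exp x <= eta / 2).
    { apply (Rmult_le_reg_r (exp x)); [lra|]. rewrite Rmult_assoc, Rinv_l by lra.
      assert (2 * B <= eta * x).
      { replace (2 * B) with (eta * (2 * B / eta)) by (field; lra).
        apply Rmult_le_compat_l; lra. }
      nra. }
    lra. }
  split; apply is_lim_spec; intros eps; simpl.
  - assert (Heps := cond_pos eps).
    destruct (Hfin (eps / 2) ltac:(lra)) as [T [HTh HT]].
    exists (T + h). intros t Ht.
    assert (0 <= norm0p h (fun s => w (t + s)) (fun s => v (t + s)) <= eps / 2).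
    { apply norm0p_bound; [lra|]. intros s Hs. unfold seg in Hs.
      destruct (HT (t + s) ltac:(lra)) as [A1 [A2 _]].
      pose proof (Hnn (t + s) ltac:(lra)).
      rewrite !Rabs_pos_eq by lra. lra. }
    rewrite Rminus_0_r, Rabs_pos_eq by lra. lra.
  - assert (Heps := cond_pos eps).
    set (eta := eps / (2 * (Q + mu + 2))).
    assert (Heta : 0 < eta) by (unfold eta; apply Rdiv_lt_0_compat; lra).
    assert (Heta2 : (Q + mu + 2) * eta = eps / 2) by (unfold eta; field; lra).
    destruct (Hfin eta Heta) as [T [HTh HT]].
    exists (T + h). intros t Ht.
    assert (N1 : 0 <= norm0p h (fun s => w (t + s)) (fun s => v (t + s)) <= eta).
    { apply norm0p_bound; [lra|]. intros s Hs. unfold seg in Hs.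
      destruct (HT (t + s) ltac:(lra)) as [A1 [A2 _]].
      pose proof (Hnn (t + s) ltac:(lra)).
      rewrite !Rabs_pos_eq by lra. lra. }
    assert (N2 : 0 <= norm0p h (fun s => dw (t + s)) (fun s => dv (t + s)) <= (Q + mu + 1) * eta).
    { apply norm0p_bound; [lra|]. intros s Hs. unfold seg in Hs.
      destruct (HT (t + s) ltac:(lra)) as [A1 [A2 A3]].
      pose proof (Hnn (t + s) ltac:(lra)).
      pose proof (HJ0 (t + s) ltac:(lra)).
      split.
      + eapply Rle_trans; [apply HdwQ; lra|].
        assert (Q * w (t + s) <= Q * eta) by (apply Rmult_le_compat_l; lra). nra.
      + rewrite Hdv by lra. apply Rabs_le.
        assert (mu * v (t + s) <= mu * eta) by (apply Rmult_le_compat_l; lra).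
        assert (0 <= mu * v (t + s)) by nra.
        assert (0 <= Q * eta) by nra. nra. }
    unfold norm1p. rewrite Rminus_0_r, Rabs_pos_eq by lra. lra.
Qed.
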